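(* Let $X$ be a real Hilbert space, $r>0$, and let $Z_1,Z_2\subset X$ be non-empty closed $r$-prox-regular sets with $d_H(Z_1,Z_2)<\infty$, and let $0<\delta\le r/2$. Then there exists a constant $C>0$ depending only on $r$ such that for all $y_1,y_2\in X$ with $\mathrm{dist}(y_i,Z_i)\le\delta$, $i=1,2$, $$|\zeta_1-\zeta_2|^2\le C\big(|y_1-y_2|^2+d_H^2(Z_1,Z_2)+d_H(Z_1,Z_2)\big),$$ where $\zeta_i\in Z_i$ is the unique vector in $Z_i$ with $|y_i-\zeta_i|=\mathrm{dist}(y_i,Z_i)$, $i=1,2$.
   Context: $X$ is a real Hilbert space with scalar product $\langle\cdot,\cdot\rangle$ and norm $|\cdot|$; $\mathrm{dist}(x,Z)=\inf_{z\in Z}|x-z|$; $d_H(Z,\hat Z)=\max\{\sup_{z\in Z}\mathrm{dist}(z,\hat Z),\sup_{\hat z\in\hat Z}\mathrm{dist}(\hat z,Z)\}$. A closed connected $Z\subset X$ is $r$-prox-regular if for every $y\in X$ with $\mathrm{dist}(y,Z)=d\in(0,r)$ there is $x\in Z$ with $\mathrm{dist}(x+\frac rd(y-x),Z)=\frac rd|y-x|=r$; for such sets every $y$ with $\mathrm{dist}(y,Z)<r$ has a unique nearest point $x\in Z$, and it satisfies $\langle y-x,x-z\rangle+\frac{|y-x|}{2r}|x-z|^2\ge0$ for all $z\in Z$. *)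

(* Defs.v *)
From HB Require Import structures.
From mathcomp Require Import all_boot all_order all_algebra.
From mathcomp Require Import all_classical all_reals all_analysis.
Set Implicit Arguments. Unset Strict Implicit. Unset Printing Implicit Defensive.
Import Order.TTheory GRing.Theory Num.Theory.
Import numFieldNormedType.Exports.
Local Open Scope classical_set_scope.
Local Open Scope ring_scope.

Definition is_inner_product (R : realType) (X : normedModType R)
  (ip : X -> X -> R) : Prop :=
  [/\ (forall x y, ip x y = ip y x),
      (forall a x y z, ip (a *: x + y) z = a * ip x z + ip y z) &
      (forall x, `|x| ^+ 2 = ip x x)].

Definition dist (R : realType) (X : normedModType R) (x : X) (Z : set X) : R :=
  inf [set `|x - z| | z in Z].

Definition hausdorff (R : realType) (X : normedModType R) (Z W : set X) : \bar R :=
  maxe (ereal_sup [set (dist z W)%:E | z in Z])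
       (ereal_sup [set (dist w Z)%:E | w in W]).

Definition prox_regular (R : realType) (X : normedModType R) (r : R) (Z : set X) : Prop :=
  [/\ closed Z, connected Z &
      forall y : X, let d := dist y Z in 0 < d -> d < r ->
        exists2 x, Z x &
          dist (x + (r / d) *: (y - x)) Z = (r / d) * `|y - x| /\
          (r / d) * `|y - x| = r].

(* Main.v *)
Require Import Defs.
From HB Require Import structures.
From mathcomp Require Import all_boot all_order all_algebra.
From mathcomp Require Import all_classical all_reals all_analysis.
From mathcomp Require Import ring lra.
Import Order.TTheory GRing.Theory Num.Theory.
Import numFieldNormedType.Exports.
Local Open Scope classical_set_scope.
Local Open Scope ring_scope.
Set Implicit Arguments. Unset Strict Implicit.

Section Aux.
Variables (R : realType) (X : normedModType R) (ip : X -> X -> R).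
Hypothesis Hip : is_inner_product ip.

Lemma ipC x y : ip x y = ip y x.
Proof. by case: Hip. Qed.
Lemma ipL a x y z : ip (a *: x + y) z = a * ip x z + ip y z.
Proof. by case: Hip. Qed.
Lemma ipN2 x : `|x| ^+ 2 = ip x x.
Proof. by case: Hip. Qed.
Lemma ipDl x y z : ip (x + y) z = ip x z + ip y z.
Proof. by rewrite -[x]scale1r ipL mul1r scale1r. Qed.
Lemma ip0l z : ip 0 z = 0.
Proof. have := ipDl 0 0 z; rewrite addr0 => h; lra. Qed.
Lemma ipZl a x z : ip (a *: x) z = a * ip x z.
Proof. by rewrite -[a *: x]addr0 ipL ip0l addr0. Qed.
Lemma ipNl x z : ip (- x) z = - ip x z.
Proof. by rewrite -scaleN1r ipZl mulN1r. Qed.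
Lemma ipBl x y z : ip (x - y) z = ip x z - ip y z.
Proof. by rewrite ipDl ipNl. Qed.
Lemma ipDr x y z : ip z (x + y) = ip z x + ip z y.
Proof. by rewrite ipC ipDl ipC [ip y z]ipC. Qed.
Lemma ipBr x y z : ip z (x - y) = ip z x - ip z y.
Proof. by rewrite ipC ipBl ipC [ip y z]ipC. Qed.
Lemma ipZr a x z : ip z (a *: x) = a * ip z x.
Proof. by rewrite ipC ipZl ipC. Qed.
Lemma normD2 x y : `|x + y| ^+ 2 = `|x| ^+ 2 + 2 * ip x y + `|y| ^+ 2.
Proof. rewrite !ipN2 ipDl !ipDr [ip y x]ipC; lra. Qed.
Lemma normB2 x y : `|x - y| ^+ 2 = `|x| ^+ 2 - 2 * ip x y + `|y| ^+ 2.
Proof. rewrite !ipN2 ipBl !ipBr [ip y x]ipC; lra. Qed.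

Lemma ipCS x y : ip x y <= `|x| * `|y|.
Proof.
have [x0|xn0] := eqVneq x 0; first by rewrite x0 ip0l normr0 mul0r.
have [y0|yn0] := eqVneq y 0; first by rewrite y0 ipC ip0l normr0 mulr0.
have px : 0 < `|x| by rewrite normr_gt0.
have py : 0 < `|y| by rewrite normr_gt0.
have := normB2 (`|y| *: x) (`|x| *: y).
rewrite !normrZ ipZl ipZr !ger0_norm ?normr_ge0 // => h.
have h0 := sqr_ge0 (`|(`|y| *: x - `|x| *: y)|).
rewrite h in h0.
have : 0 <= 2 * (`|x| * `|y|) * (`|x| * `|y| - ip x y) by nra.
rewrite pmulr_rge0 ?subr_ge0 //; nra.
Qed.

Lemma dist_lb x (Z : set X) z : Z z -> dist x Z <= `|x - z|.
Proof.
move=> Zz; apply: ge_inf; last by exists z.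
by exists 0 => _ [w _ <-]; rewrite normr_ge0.
Qed.

Lemma dist_ge0 x (Z : set X) : Z !=set0 -> 0 <= dist x Z.
Proof.
move=> [z Zz]; apply: lb_le_inf; first by exists `|x - z|, z.
by move=> _ [w _ <-]; rewrite normr_ge0.
Qed.

Lemma dist_approx x (Z : set X) e : Z !=set0 -> 0 < e ->
  exists2 z, Z z & `|x - z| < dist x Z + e.
Proof.
move=> [z0 Zz0] e0.
have [_ [z Zz <-] h] : exists2 y, [set `|x - z| | z in Z] y & y < dist x Z + e.
  by apply: inf_lt; [exists `|x - z0|, z0 | rewrite ltrDl].
by exists z.
Qed.

Lemma prox_ineq (r : R) (Z : set X) y zeta : 0 < r -> prox_regular r Z ->
  dist y Z < r -> Z zeta -> `|y - zeta| = dist y Z ->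
  forall z, Z z -> 0 <= 2 * r * ip (y - zeta) (zeta - z) + `|y - zeta| * `|zeta - z| ^+ 2.
Proof.
move=> r0 [_ _ PR] dr Zzeta hzeta.
have Zn : Z !=set0 by exists zeta.
have d0 := @dist_ge0 y Z Zn.
set d := dist y Z in dr d0 hzeta.
have [dz|dpos] := eqVneq d 0.
  move: hzeta; rewrite dz => /eqP; rewrite normr_eq0 => /eqP ->.
  by move=> z _; rewrite ip0l normr0 !mulr0 mul0r addr0.
have dp : 0 < d by rewrite lt_neqAle eq_sym dpos d0.
have [x Zx [hw hr]] := PR y dp dr.
set t := r / d in hw hr.
have tp : 0 < t by rewrite divr_gt0.
have td : t * d = r by rewrite /t divfK // gt_eqF.
have hux : `|y - x| = d.
  by apply: (mulfI (lt0r_neq0 tp)); rewrite hr td.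
have key : forall z, Z z -> 0 <= 2 * r * ip (y - x) (x - z) + d * `|x - z| ^+ 2.
  move=> z Zz.
  have := @dist_lb (x + t *: (y - x)) Z z Zz.
  rewrite hw hr addrAC => h.
  have h2 : r ^+ 2 <= `|x - z + t *: (y - x)| ^+ 2.
    have := normr_ge0 (x - z + t *: (y - x)); nra.
  rewrite normD2 normrZ (ger0_norm (ltW tp)) hux ipZr ipC in h2.
  have : 0 <= d * (`|x - z| ^+ 2 + 2 * (t * ip (y - x) (x - z))).
    apply: mulr_ge0; first exact: ltW.
    have e : (t * d) ^+ 2 = r ^+ 2 by rewrite td.
    move: h2 e; rewrite exprMn; lra.
  rewrite -td; nra.
have xz : x = zeta.
  have := key zeta Zzeta.
  have := normD2 (y - x) (x - zeta).
  rewrite addrA subrK hzeta hux => e k.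
  have v2 : `|x - zeta| ^+ 2 <= 0 by nra.
  have : `|x - zeta| = 0 by have := normr_ge0 (x - zeta); nra.
  by move/eqP; rewrite normr_eq0 subr_eq0 => /eqP.
by move: key; rewrite xz hzeta.
Qed.
End Aux.

Theorem lemma4p3 (R : realType) (r : R) : 0 < r ->
  exists2 C : R, 0 < C &
  forall (X : completeNormedModType R) (ip : X -> X -> R),
    is_inner_product ip ->
  forall (Z1 Z2 : set X),
    Z1 !=set0 -> Z2 !=set0 ->
    prox_regular r Z1 -> prox_regular r Z2 ->
    (hausdorff Z1 Z2 < +oo)%E ->
  forall delta : R, 0 < delta -> delta <= r / 2 ->
  forall y1 y2 zeta1 zeta2 : X,
    dist y1 Z1 <= delta -> dist y2 Z2 <= delta ->
    Z1 zeta1 -> `|y1 - zeta1| = dist y1 Z1 ->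
    Z2 zeta2 -> `|y2 - zeta2| = dist y2 Z2 ->
    let dH := fine (hausdorff Z1 Z2) in
    `|zeta1 - zeta2| ^+ 2 <= C * (`|y1 - y2| ^+ 2 + dH ^+ 2 + dH).
Proof.
move=> r0.
exists (10 + 4 * r); first lra.
move=> X ip Hip Z1 Z2 n1 n2 P1 P2 hH delta dl0 dlr y1 y2 zeta1 zeta2 hy1 hy2
  Z1z1 hz1 Z2z2 hz2.
cbv zeta; set dH := fine (hausdorff Z1 Z2).
have L1 : ((dist zeta1 Z2)%:E <= hausdorff Z1 Z2)%E.
  rewrite /hausdorff le_max; apply/orP; left.
  by apply: le_ereal_sup_tmp; exists (dist zeta1 Z2)%:E => //; exists zeta1.
have L2 : ((dist zeta2 Z1)%:E <= hausdorff Z1 Z2)%E.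
  rewrite /hausdorff le_max; apply/orP; right.
  by apply: le_ereal_sup_tmp; exists (dist zeta2 Z1)%:E => //; exists zeta2.
have [h1 h2] : dist zeta1 Z2 <= dH /\ dist zeta2 Z1 <= dH.
  by rewrite /dH; move: hH L1 L2; case: (hausdorff Z1 Z2) => [h| |] //=.
have g0 := dist_ge0 zeta1 n2.
set A := `|zeta1 - zeta2|; set D := `|y1 - y2|.
have main : forall eps, 0 < eps ->
    A ^+ 2 <= 8 * D ^+ 2 + 4 * r * (dH + eps) + 10 * (dH + eps) ^+ 2.
  move=> eps e0.
  have [z1 Zz1 hz1'] := dist_approx zeta2 n1 e0.
  have [z2 Zz2 hz2'] := dist_approx zeta1 n2 e0.
  have d1r : dist y1 Z1 < r by lra.
  have d2r : dist y2 Z2 < r by lra.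
  have I1 := prox_ineq Hip r0 P1 d1r Z1z1 hz1 Zz1.
  have I2 := prox_ineq Hip r0 P2 d2r Z2z2 hz2 Zz2.
  set h := dH + eps.
  set u1 := y1 - zeta1 in I1 hz1 *; set u2 := y2 - zeta2 in I2 hz2 *.
  set a := zeta1 - zeta2 in A *.
  set e1 := zeta2 - z1 in hz1'; set e2 := zeta1 - z2 in hz2'.
  have E1 : zeta1 - z1 = a + e1 by rewrite /a /e1 addrA subrK.
  have E2 : zeta2 - z2 = e2 - a by rewrite /a /e2 opprB [RHS]addrC addrA subrK.
  rewrite E1 (ipDr Hip) in I1; rewrite E2 (ipBr Hip) in I2.
  have Eu : ip u1 a - ip u2 a = ip (y1 - y2) a - A ^+ 2.
    rewrite -(ipBl Hip) /A (ipN2 Hip) // -(ipBl Hip); congr (ip _ a).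
    by rewrite /u1 /u2 /a !opprD !opprK [LHS]addrACA.
  have ne1 : `|e1| <= h by rewrite /h; lra.
  have ne2 : `|e2| <= h by rewrite /h; lra.
  have n0 := normr_ge0 e1; have n0' := normr_ge0 e2.
  have A0 : 0 <= A := normr_ge0 _.
  have D0 : 0 <= D := normr_ge0 _.
  have u10 := normr_ge0 u1; have u20 := normr_ge0 u2.
  have F1 : ip u1 e1 <= r / 2 * h.
    apply: le_trans (ipCS Hip u1 e1) _; apply: ler_pM => //; lra.
  have F2 : ip u2 e2 <= r / 2 * h.
    apply: le_trans (ipCS Hip u2 e2) _; apply: ler_pM => //; lra.
  have F3 : ip (y1 - y2) a <= D * A := ipCS Hip _ _.
  have N1 : `|a + e1| <= A + h.
    apply: le_trans (ler_normD _ _) _. rewrite /A; lra.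
  have N2 : `|e2 - a| <= A + h.
    apply: le_trans (ler_normB _ _) _; rewrite /A; lra.
  have N10 := normr_ge0 (a + e1); have N20 := normr_ge0 (e2 - a).
  have F4 : `|u1| * `|a + e1| ^+ 2 <= r / 2 * (A + h) ^+ 2.
    apply: ler_pM; [by [] | exact: sqr_ge0 | lra | ].
    by rewrite ler_pXn2r // ?nnegrE //; lra.
  have F5 : `|u2| * `|e2 - a| ^+ 2 <= r / 2 * (A + h) ^+ 2.
    apply: ler_pM; [by [] | exact: sqr_ge0 | lra | ].
    by rewrite ler_pXn2r // ?nnegrE //; lra.
  have S : 0 <= r * (2 * D * A - 2 * A ^+ 2 + 2 * r * h + (A + h) ^+ 2).
    have Fr1 : 2 * r * ip u1 e1 <= 2 * r * (r / 2 * h) by rewrite ler_pM2l //; lra.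
    have Fr2 : 2 * r * ip u2 e2 <= 2 * r * (r / 2 * h) by rewrite ler_pM2l //; lra.
    have Fr3 : 2 * r * ip (y1 - y2) a <= 2 * r * (D * A) by rewrite ler_pM2l //; lra.
    have e : 2 * r * (r / 2 * h) = r * r * h by field.
    rewrite e in Fr1 Fr2. nra.
  rewrite pmulr_rge0 // in S.
  have := sqr_ge0 (A - 4 * D); have := sqr_ge0 (A - 4 * h); nra.
have dH0 : 0 <= dH by lra.
have K : A ^+ 2 <= 8 * D ^+ 2 + 4 * r * dH + 10 * dH ^+ 2.
  apply/ler_addgt0Pr => e e0.
  set M := 4 * r + 20 * dH + 10.
  have M0 : 0 < M by rewrite /M; lra.
  set eps := e / (M + e).
  have ee : eps * (M + e) = e by rewrite /eps divfK // lt0r_neq0 // addr_gt0.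
  have eps0 : 0 < eps by rewrite /eps divr_gt0 // addr_gt0.
  have hM : M = 4 * r + 20 * dH + 10 by [].
  clearbody eps M.
  have eps1 : eps <= 1 by nra.
  have := main eps eps0.
  have : eps * eps <= eps * 1 by rewrite ler_pM2l.
  have : eps * M <= e by nra.
  rewrite hM => *; nra.
have := mulr_ge0 (ltW r0) (sqr_ge0 D); have := mulr_ge0 (ltW r0) (sqr_ge0 dH).
have := sqr_ge0 D; nra.
Qed.
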